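(* Let $A$ be an $m \times m$ normal centrosymmetric nonnegative matrix with eigenvalues $\alpha_1, \alpha_2, \ldots, \alpha_m$, where $\alpha_1$ is the Perron root of $A$, and let $u_1$ be a unit nonnegative eigenvector of $A$ corresponding to $\alpha_1$ with $Ju_1 = u_1$. Let $B$ be an $n \times n$ normal centrosymmetric nonnegative matrix with eigenvalues $\beta_1, \beta_2, \ldots, \beta_n$, where $\beta_1$ is the Perron root of $B$, and let $v_1$ be a unit nonnegative eigenvector of $B$ corresponding to $\beta_1$ with $Jv_1 = v_1$. Let $\rho, \xi \geq 0$ and let $\gamma_1, \gamma_2, \gamma_3$ be the eigenvalues of $$\widehat{C} = \begin{bmatrix} \beta_1 & \rho & \xi \\ \rho & \alpha_1 & \rho \\ \xi & \rho & \beta_1 \end{bmatrix}.$$ Then the matrix $$C = \begin{bmatrix} B & \rho v_1 u_1^T & \xi v_1 v_1^T \\ \rho u_1 v_1^T & A & J\rho u_1 v_1^T J \\ \xi v_1 v_1^T & \rho v_1 u_1^T & B \end{bmatrix}$$ is a normal centrosymmetric nonnegative matrix with eigenvalues $\gamma_1, \gamma_2, \gamma_3, \alpha_2, \ldots, \alpha_m, \beta_2, \ldots, \beta_n, \beta_2, \ldots, \beta_n$.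
   Context: $J$ denotes the reverse identity matrix (ones on the anti-diagonal, zeros elsewhere) of whatever size is appropriate where it appears (in $J\rho u_1 v_1^T J$, the left $J$ is $m \times m$ and the right $J$ is $n \times n$). A square matrix $Q$ is centrosymmetric if $JQJ = Q$, nonnegative if all entries are nonnegative, and normal if $QQ^* = Q^*Q$. The Perron root of a nonnegative matrix is its spectral radius, which is an eigenvalue. *)

(* Defs.v *)
From HB Require Import structures.
From mathcomp Require Import all_boot all_order all_algebra.
From mathcomp Require Import complex.
Set Implicit Arguments. Unset Strict Implicit. Unset Printing Implicit Defensive.
Import Order.TTheory GRing.Theory Num.Theory.
Local Open Scope ring_scope.

Section Defs.
Variable R : rcfType.

Definition Jmx (k : nat) : 'M[R]_k := \matrix_(i < k, j < k) ((j == rev_ord i)%:R).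

Definition centrosymmetric k (Q : 'M[R]_k) : Prop := Jmx k *m Q *m Jmx k = Q.

Definition nonneg_mx p q (Q : 'M[R]_(p, q)) : Prop := forall i j, 0 <= Q i j.

(* normal: Q Q^* = Q^* Q; for real matrices Q^* = Q^T *)
Definition normal_mx k (Q : 'M[R]_k) : Prop := Q *m Q^T = Q^T *m Q.

Definition cmx k (Q : 'M[R]_k) : 'M[R[i]]_k := map_mx (fun x => (x%:C)%C) Q.

(* the eigenvalues of Q, listed with algebraic multiplicity, are the items of s *)
Definition has_eigenvalues k (Q : 'M[R]_k) (s : seq R[i]) : Prop :=
  char_poly (cmx Q) = \prod_(x <- s) ('X - x%:P).

Definition is_perron_root k (Q : 'M[R]_k) (r : R) : Prop :=
  root (char_poly (cmx Q)) (r%:C)%C /\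
  forall l : R[i], root (char_poly (cmx Q)) l -> `|l| <= (r%:C)%C.

Definition Chat (b1 a1 rho xi : R) : 'M[R]_3 :=
  \matrix_(i < 3, j < 3)
    (nth 0 (nth [::] [:: [:: b1; rho; xi]; [:: rho; a1; rho]; [:: xi; rho; b1]] i) j).

Definition Cmx m n (A : 'M[R]_m) (B : 'M[R]_n) (u : 'cV[R]_m) (v : 'cV[R]_n)
  (rho xi : R) : 'M[R]_(n + (m + n)) :=
  block_mx B (row_mx (rho *: (v *m u^T)) (xi *: (v *m v^T)))
    (col_mx (rho *: (u *m v^T)) (xi *: (v *m v^T)))
    (block_mx A (Jmx m *m (rho *: (u *m v^T)) *m Jmx n)
              (rho *: (v *m u^T)) B).
End Defs.

(* Main.v *)
Require Import Defs.
From HB Require Import structures.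
From mathcomp Require Import all_boot all_order all_algebra.
From mathcomp Require Import complex zify ring.
Import Order.TTheory GRing.Theory Num.Theory.
Local Open Scope ring_scope.
Set Implicit Arguments. Unset Strict Implicit.

Lemma sylvester (F : comUnitRingType) k N (X : 'M[F]_(N,k)) (Y : 'M[F]_(k,N)) :
  \det (1%:M - X *m Y) = \det (1%:M - Y *m X).
Proof.
pose G := block_mx (1%:M : 'M_k) Y X (1%:M : 'M_N).
have e1 : block_mx 1%:M 0 (- X) 1%:M *m G = block_mx 1%:M Y 0 (1%:M - X *m Y).
  rewrite /G mulmx_block; congr block_mx.
  - by rewrite !mul1mx mul0mx addr0.
  - by rewrite mul1mx mul0mx addr0.
  - by rewrite mulNmx mulmx1 mul1mx addNr.
  - by rewrite mulNmx mul1mx addrC.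
have e2 : block_mx 1%:M (- Y) 0 1%:M *m G = block_mx (1%:M - Y *m X) 0 X 1%:M.
  rewrite /G mulmx_block; congr block_mx.
  - by rewrite mul1mx mulNmx.
  - by rewrite mul1mx mulNmx mulmx1 addrN.
  - by rewrite mul0mx mul1mx add0r.
  - by rewrite mul0mx mul1mx add0r.
have := congr1 determinant e1; have := congr1 determinant e2.
rewrite !det_mulmx !det_ublock !det_lblock !det1 !mul1r !mulr1.
by move=> -> ->.
Qed.

Lemma key (F : fieldType) k N (C D : 'M[F]_N) (U : 'M[F]_(N,k)) (Lam M : 'M[F]_k) (x : F) :
  C = D + U *m M *m U^T -> D *m U = U *m Lam -> U^T *m U = 1%:M ->
  \det (x%:M - Lam) != 0 ->
  \det (x%:M - C) * \det (x%:M - Lam) = \det (x%:M - D) * \det (x%:M - (Lam + M)).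
Proof.
move=> eC eD eU dL.
set T := x%:M - D; set L := x%:M - Lam.
have hTU : T *m U = U *m L.
  by rewrite /T /L mulmxBl mulmxBr eD mul_scalar_mx mul_mx_scalar.
have Lu : L \in unitmx by rewrite unitmxE unitfE.
have hU : U = T *m U *m invmx L by rewrite hTU -mulmxA mulmxV ?mulmx1.
have eX : x%:M - C = T *m (1%:M - U *m (invmx L *m M *m U^T)).
  rewrite eC opprD addrA -/T mulmxBr mulmx1; congr (_ - _).
  by rewrite {1}hU !mulmxA.
rewrite eX det_mulmx sylvester -!mulmxA eU mulmx1 -mulrA; congr (_ * _).
rewrite mulrC -det_mulmx mulmxBr mulmx1 mulmxA mulmxV // mul1mx /L.
by rewrite opprD addrA.
Qed.
Lemma tz_eq0 (R : rcfType) k (z : 'cV[R]_k) : z^T *m z = 0 -> z = 0.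
Proof.
move=> /matrixP /(_ 0 0); rewrite !mxE => h.
have H := @psumr_eq0P _ 'I_k xpredT (fun i => z i 0 * z i 0)
   (fun i _ => (sqr_ge0 (z i 0) : 0 <= z i 0 * z i 0)).
apply/matrixP => i j; rewrite ord1 mxE.
have : z i 0 * z i 0 = 0.
  apply: H => //; rewrite -[RHS]h; apply: eq_bigr => l _; by rewrite mxE.
by move/eqP; rewrite mulf_eq0 orbb => /eqP.
Qed.

Lemma trZ (R : pzRingType) p q (a : R) (A : 'M[R]_(p,q)) : (a *: A)^T = a *: A^T.
Proof. by apply/matrixP => i j; rewrite !mxE. Qed.
Lemma trB (R : pzRingType) p q (A B : 'M[R]_(p,q)) : (A - B)^T = A^T - B^T.
Proof. by apply/matrixP => i j; rewrite !mxE. Qed.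
Lemma trD (R : pzRingType) p q (A B : 'M[R]_(p,q)) : (A + B)^T = A^T + B^T.
Proof. by apply/matrixP => i j; rewrite !mxE. Qed.

Lemma normal_eig (R : rcfType) k (Q : 'M[R]_k) (w : 'cV_k) c :
  normal_mx Q -> Q *m w = c *: w -> Q^T *m w = c *: w.
Proof.
move=> nQ eQ; apply/eqP; rewrite -subr_eq0; apply/eqP.
set z := Q^T *m w - c *: w.
apply: tz_eq0.
set s := w^T *m w.
have zT : z^T = w^T *m Q - c *: w^T by rewrite /z trB trZ trmx_mul trmxK.
have h1 : w^T *m Q *m (Q^T *m w) = (c * c) *: s.
  rewrite mulmxA -(mulmxA _ Q) nQ mulmxA -trmx_mul -mulmxA eQ.
  by rewrite trZ -scalemxAl -scalemxAr scalerA.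
have h2 : w^T *m Q *m w = c *: s by rewrite -mulmxA eQ -scalemxAr.
have h3 : w^T *m (Q^T *m w) = c *: s by rewrite mulmxA -trmx_mul eQ trZ -scalemxAl.
rewrite zT mulmxBl !mulmxBr h1 -!scalemxAl -!scalemxAr h2 h3 -/s.
by rewrite !scalerA !subrr ?subr0.
Qed.
Lemma JmulE (R : rcfType) k p (Q : 'M[R]_(k,p)) i j : (Jmx R k *m Q) i j = Q (rev_ord i) j.
Proof.
rewrite mxE (bigD1 (rev_ord i)) //= mxE eqxx mul1r big1 ?addr0 // => l /negbTE.
by rewrite mxE => ->; rewrite mul0r.
Qed.

Lemma mulJE (R : rcfType) k p (Q : 'M[R]_(p,k)) i j : (Q *m Jmx R k) i j = Q i (rev_ord j).
Proof.
rewrite mxE (bigD1 (rev_ord j)) //= mxE rev_ordK eqxx mulr1 big1 ?addr0 // => l hl.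
rewrite mxE; case: eqP => [e|]; last by rewrite mulr0.
by move: hl; rewrite e rev_ordK eqxx.
Qed.

Lemma trJ (R : rcfType) k : (Jmx R k)^T = Jmx R k.
Proof.
apply/matrixP => i j; rewrite !mxE.
have -> : (i == rev_ord j) = (j == rev_ord i).
  by apply/eqP/eqP => [->|->]; rewrite rev_ordK.
by [].
Qed.

Lemma JQJE (R : rcfType) k (Q : 'M[R]_k) i j :
  (Jmx R k *m Q *m Jmx R k) i j = Q (rev_ord i) (rev_ord j).
Proof. by rewrite mulJE JmulE. Qed.

Variant split3_spec p q : 'I_(p + (q + p)) -> Type :=
 | S3l (k : 'I_p) : split3_spec (lshift (q + p) k)
 | S3m (k : 'I_q) : split3_spec (rshift p (lshift p k))
 | S3r (k : 'I_p) : split3_spec (rshift p (rshift q k)).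

Lemma split3P p q i : @split3_spec p q i.
Proof.
case: (splitP i) => [k ek|k ek].
  have -> : i = lshift (q + p) k by apply: val_inj.
  exact: S3l.
case: (splitP k) => [l el|l el].
  have -> : i = rshift p (lshift p l) by apply: val_inj => /=; rewrite ek el.
  exact: S3m.
have -> : i = rshift p (rshift q l) by apply: val_inj => /=; rewrite ek el.
exact: S3r.
Qed.

Lemma rev3l p q (k : 'I_p) :
  rev_ord (lshift (q + p) k) = rshift p (rshift q (rev_ord k)).
Proof. apply: val_inj => /=; have := ltn_ord k; lia. Qed.
Lemma rev3m p q (k : 'I_q) :
  rev_ord (rshift p (lshift p k) : 'I_(p + (q + p))) = rshift p (lshift p (rev_ord k)).
Proof. apply: val_inj => /=; have := ltn_ord k; lia. Qed.
Lemma rev3r p q (k : 'I_p) :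
  rev_ord (rshift p (rshift q k) : 'I_(p + (q + p))) = lshift (q + p) (rev_ord k).
Proof. apply: val_inj => /=; have := ltn_ord k; lia. Qed.

Lemma outerE (R : rcfType) p q a (x : 'cV[R]_p) (y : 'cV[R]_q) i j :
  (a *: (x *m y^T)) i j = a * (x i 0 * y j 0).
Proof. by rewrite !mxE big_ord1 !mxE. Qed.
Lemma char_poly_horner (F : fieldType) k (Q : 'M[F]_k) x :
  (char_poly Q).[x] = \det (x%:M - Q).
Proof.
rewrite /char_poly -horner_evalE -det_map_mx; congr (\det _).
apply/matrixP => i j; rewrite !mxE.
by rewrite rmorphB rmorphMn /= horner_evalE hornerX horner_evalE hornerC.
Qed.

Lemma sub_blockd (F : fieldType) p q (P : 'M[F]_p) (Q : 'M[F]_q) x :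
  x%:M - block_mx P 0 0 Q = block_mx (x%:M - P) 0 0 (x%:M - Q).
Proof.
by rewrite (scalar_mx_block p q x) opp_block_mx add_block_mx !oppr0 !addr0.
Qed.

Lemma det_blockd (F : fieldType) p q (P : 'M[F]_p) (Q : 'M[F]_q) x :
  \det (x%:M - block_mx P 0 0 Q) = \det (x%:M - P) * \det (x%:M - Q).
Proof. by rewrite sub_blockd det_ublock. Qed.

Lemma det11 (F : fieldType) (b x : F) : \det (x%:M - b%:M : 'M_1) = x - b.
Proof. by rewrite det_mx11 !mxE. Qed.

Lemma poly_eq0_pts (F : numFieldType) (P : {poly F}) (a b : F) :
  (forall x, x != a -> x != b -> P.[x] = 0) -> P = 0.
Proof.
move=> h.
have : P * (('X - a%:P) * ('X - b%:P)) = 0.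
  set Q := P * _.
  apply: (@roots_geq_poly_eq0 _ Q [seq i%:R | i <- iota 0 (size Q)]).
  - apply/allP => y _; rewrite /root /Q !hornerM !hornerXsubC.
    case: (eqVneq y a) => [->|ya]; first by rewrite subrr !(mulr0, mul0r).
    case: (eqVneq y b) => [->|yb]; first by rewrite subrr !(mulr0, mul0r).
    by rewrite h // mul0r.
  - rewrite map_inj_uniq ?iota_uniq //; by move=> i j /eqP; rewrite eqr_nat => /eqP.
  - by rewrite size_map size_iota.
move/eqP; rewrite !mulf_eq0 !polyXsubC_eq0 !orbF.
by move/eqP.
Qed.

Lemma map_tr (R S : Type) (f : R -> S) p q (A : 'M[R]_(p,q)) :
  (map_mx f A)^T = map_mx f A^T.
Proof. by apply/matrixP => i j; rewrite !mxE. Qed.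

Unset Implicit Arguments. Set Strict Implicit.

Theorem lemma3p5 (R : rcfType) (m n : nat)
  (A : 'M[R]_m.+1) (a1 : R) (alpha : 'I_m -> R[i]) (u1 : 'cV[R]_m.+1)
  (B : 'M[R]_n.+1) (b1 : R) (beta : 'I_n -> R[i]) (v1 : 'cV[R]_n.+1)
  (rho xi : R) (gamma : 'I_3 -> R[i]) :
  normal_mx A -> centrosymmetric A -> nonneg_mx A ->
  has_eigenvalues A ((a1%:C)%C :: [seq alpha k | k <- enum 'I_m]) ->
  is_perron_root A a1 ->
  u1^T *m u1 = 1 -> nonneg_mx u1 -> A *m u1 = a1 *: u1 -> Jmx R m.+1 *m u1 = u1 ->
  normal_mx B -> centrosymmetric B -> nonneg_mx B ->
  has_eigenvalues B ((b1%:C)%C :: [seq beta k | k <- enum 'I_n]) ->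
  is_perron_root B b1 ->
  v1^T *m v1 = 1 -> nonneg_mx v1 -> B *m v1 = b1 *: v1 -> Jmx R n.+1 *m v1 = v1 ->
  0 <= rho -> 0 <= xi ->
  has_eigenvalues (Chat b1 a1 rho xi) [seq gamma k | k <- enum 'I_3] ->
  let C := Cmx A B u1 v1 rho xi in
  normal_mx C /\ centrosymmetric C /\ nonneg_mx C /\
  has_eigenvalues C
    ([seq gamma k | k <- enum 'I_3] ++ [seq alpha k | k <- enum 'I_m]
      ++ [seq beta k | k <- enum 'I_n] ++ [seq beta k | k <- enum 'I_n]).
Proof.
move=> nA cA pA eA _ uu un uA Ju nB cB pB eB _ vv vn vB Jv hr hx eC C.
have JB : Jmx R m.+1 *m (rho *: (u1 *m v1^T)) *m Jmx R n.+1 = rho *: (u1 *m v1^T).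
  rewrite -scalemxAr -scalemxAl mulmxA Ju -mulmxA; congr (_ *: (_ *m _)).
  by rewrite -[Jmx R n.+1]trJ -trmx_mul Jv.
have Cs : C = block_mx B (row_mx (rho *: (v1 *m u1^T)) (xi *: (v1 *m v1^T)))
    (col_mx (rho *: (u1 *m v1^T)) (xi *: (v1 *m v1^T)))
    (block_mx A (rho *: (u1 *m v1^T)) (rho *: (v1 *m u1^T)) B).
  by rewrite /C /Cmx JB.
have hu k : u1 (rev_ord k) 0 = u1 k 0.
  by rewrite -JmulE Ju.
have hv k : v1 (rev_ord k) 0 = v1 k 0.
  by rewrite -JmulE Jv.
have hA i j : A (rev_ord i) (rev_ord j) = A i j.
  by rewrite -JQJE cA.
have hB i j : B (rev_ord i) (rev_ord j) = B i j.
  by rewrite -JQJE cB.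
have centro : centrosymmetric C.
  rewrite /centrosymmetric Cs; apply/matrixP => i j; rewrite JQJE.
  case: (split3P i) => k; case: (split3P j) => l;
  rewrite ?rev3l ?rev3m ?rev3r !(block_mxEul, block_mxEur, block_mxEdl, block_mxEdr,
    row_mxEl, row_mxEr, col_mxEu, col_mxEd) ?outerE ?(hu, hv, hA, hB) //.
have nneg : nonneg_mx C.
  rewrite Cs => i j.
  case: (split3P i) => k; case: (split3P j) => l;
  rewrite !(block_mxEul, block_mxEur, block_mxEdl, block_mxEdr,
    row_mxEl, row_mxEr, col_mxEu, col_mxEd) ?outerE //;
  by rewrite ?mulr_ge0.
pose U : 'M[R]_(n.+1 + (m.+1 + n.+1), 1 + (1 + 1)) :=
  block_mx v1 0 0 (block_mx u1 0 0 v1).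
pose Lam : 'M[R]_(1 + (1 + 1)) := block_mx b1%:M 0 0 (block_mx a1%:M 0 0 b1%:M).
pose Mm : 'M[R]_(1 + (1 + 1)) := block_mx 0 (row_mx rho%:M xi%:M)
   (col_mx rho%:M xi%:M) (block_mx 0 rho%:M rho%:M 0).
pose D := block_mx B 0 0 (block_mx A 0 0 B).
have eCD : C = D + U *m Mm *m U^T.
  rewrite Cs /D /U /Mm !tr_block_mx !trmx0 !mulmx_block.
  rewrite !(mul0mx, mulmx0, addr0, add0r, mul_mx_scalar, mul_row_col, mul_mx_row, mul_col_mx, mul_col_row, mul_row_block, mul_block_col).
  rewrite !row_mx0 !add_row_mx !col_mx0 !addr0 !add0r -!scalemxAl.
  rewrite -[col_mx (row_mx _ _) (row_mx _ _)]block_mxEv add_block_mx !addr0 !add0r.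
  by rewrite add_block_mx !addr0 !add0r.
have AtU : A^T *m u1 = a1 *: u1 := normal_eig nA uA.
have BtV : B^T *m v1 = b1 *: v1 := normal_eig nB vB.
have DU : D *m U = U *m Lam.
  rewrite /D /U /Lam !mulmx_block !(mul0mx, mulmx0, addr0, add0r, mul_mx_scalar).
  by rewrite uA vB.
have DtU : D^T *m U = U *m Lam.
  rewrite /D /U /Lam !tr_block_mx !trmx0 !mulmx_block !(mul0mx, mulmx0, addr0, add0r, mul_mx_scalar).
  by rewrite AtU BtV.
have UU : U^T *m U = 1%:M.
  rewrite /U !tr_block_mx !trmx0 !mulmx_block !(mul0mx, mulmx0, addr0, add0r).
  by rewrite uu vv -!scalar_mx_block.
have MT : Mm^T = Mm.
  by rewrite /Mm !tr_block_mx !tr_row_mx !tr_col_mx !tr_scalar_mx !trmx0.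
have DD : D *m D^T = D^T *m D.
  rewrite /D !tr_block_mx !trmx0 !mulmx_block !(mul0mx, mulmx0, addr0, add0r).
  by rewrite nA nB.
have normC : normal_mx C.
  set E := U *m Mm *m U^T.
  have ET : E^T = E by rewrite /E !trmx_mul trmxK MT mulmxA.
  have h1 : D *m E = U *m Lam *m Mm *m U^T by rewrite /E !mulmxA DU.
  have h2 : D^T *m E = U *m Lam *m Mm *m U^T by rewrite /E !mulmxA DtU.
  have h3 : E *m D^T = U *m Mm *m (U *m Lam)^T by rewrite -DU trmx_mul /E !mulmxA.
  have h4 : E *m D = U *m Mm *m (U *m Lam)^T.
    by rewrite -DtU trmx_mul trmxK /E !mulmxA.
  rewrite /normal_mx eCD -/E trD ET !mulmxDl !mulmxDr h1 h2 h3 h4 DD.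
  by [].
have LM : Lam + Mm = Chat b1 a1 rho xi.
  apply/matrixP => i j; rewrite mxE.
  case: (split3P i) => k; case: (split3P j) => l;
  rewrite !(block_mxEul, block_mxEur, block_mxEdl, block_mxEdr,
    row_mxEl, row_mxEr, col_mxEu, col_mxEd) !ord1 !mxE /=;
  by rewrite ?mulr1n ?mulr0n ?addr0 ?add0r.
split; first exact: normC.
split; first exact: centro.
split; first exact: nneg.
rewrite /has_eigenvalues.
pose f := real_complex R.
have cE k (Q : 'M[R]_k) : cmx Q = map_mx f Q by [].
have eA' : char_poly (cmx A) = ('X - (a1%:C)%C%:P) * \prod_(z <- [seq alpha k | k <- enum 'I_m]) ('X - z%:P).
  by rewrite eA big_cons.
have eB' : char_poly (cmx B) = ('X - (b1%:C)%C%:P) * \prod_(z <- [seq beta k | k <- enum 'I_n]) ('X - z%:P).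
  by rewrite eB big_cons.
rewrite !big_cat /=.
apply/eqP; rewrite -subr_eq0; apply/eqP.
apply: (@poly_eq0_pts _ _ (a1%:C)%C (b1%:C)%C) => x xa xb.
rewrite hornerD hornerN; apply/eqP; rewrite subr_eq0; apply/eqP.
have hL : \det (x%:M - map_mx f Lam) = (x - (b1%:C)%C) * ((x - (a1%:C)%C) * (x - (b1%:C)%C)).
  by rewrite /Lam map_block_mx !map_mx0 !map_block_mx !map_mx0 !map_scalar_mx !det_blockd !det11.
have hL0 : \det (x%:M - map_mx f Lam) != 0.
  by rewrite hL !mulf_neq0 // subr_eq0.
have K := @key _ _ _ (cmx C) (map_mx f D) (map_mx f U) (map_mx f Lam) (map_mx f Mm) x.
have K1 : cmx C = map_mx f D + map_mx f U *m map_mx f Mm *m (map_mx f U)^T.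
  by rewrite cE eCD map_mxD !map_mxM map_tr.
have K2 : map_mx f D *m map_mx f U = map_mx f U *m map_mx f Lam.
  by rewrite -!map_mxM DU.
have K3 : (map_mx f U)^T *m map_mx f U = 1%:M.
  by rewrite map_tr -map_mxM UU map_scalar_mx rmorph1.
move: (K K1 K2 K3 hL0).
rewrite -map_mxD LM -[map_mx f (Chat _ _ _ _)]/(cmx (Chat b1 a1 rho xi)).
rewrite -[\det (x%:M - cmx (Chat _ _ _ _))]char_poly_horner eC.
rewrite hL /D map_block_mx !map_mx0 map_block_mx !map_mx0 !det_blockd -(cE _ A) -(cE _ B).
rewrite -!char_poly_horner eA' eB' => H.
apply: (mulIf hL0); rewrite hL H !hornerM !hornerXsubC.
ring.
Qed.
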